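(* Fix a positive integer $s$ and let $h_{i,j}=h_{s,i,j}$ and $H_i(x)=\sum_{j\ge i+1}h_{s,i,j}x^j$ be as in the context. Then for $i>1$, $$H_i=-\Big(\frac{sx}{i}-1\Big)H_{i-1}+\frac{x(x-1)}{i}H_{i-1}',$$ where $H'$ denotes the derivative with respect to $x$ (as formal power series).
   Context: For a fixed positive integer $s$, the numbers $h_{s,i,j}$ (integers $i\ge 0$, $j$) are defined recursively by: $h_{s,i,j}=0$ if $j\le i$; for $i=0$ and $j\ge 1$, $h_{s,0,j}=\binom{s+j-1}{j}\frac{s-j}{s}$; for $i>0$ and $j>i$, $h_{s,i,j}=-\frac{s-j+1}{i}h_{s,i-1,j-1}-\frac{j-i}{i}h_{s,i-1,j}$. $H_i(x)=\sum_{j\ge i+1}h_{s,i,j}x^j$ is the ordinary generating function, a formal power series in $x$. *)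

(* Defs.v *)
From HB Require Import structures.
From mathcomp Require Import all_boot all_order all_algebra.
Set Implicit Arguments. Unset Strict Implicit. Unset Printing Implicit Defensive.
Import Order.TTheory GRing.Theory Num.Theory.
Local Open Scope ring_scope.

(* The numbers h_{s,i,j} (rational valued), for i j : nat.
   Negative j are irrelevant since h_{s,i,j} = 0 whenever j <= i, i >= 0. *)
Fixpoint h (s i j : nat) : rat :=
  match i with
  | 0%N => if (1 <= j)%N
           then ('C(s + j - 1, j))%:R * ((s%:R - j%:R) / s%:R)
           else 0
  | i'.+1 => if (j <= i)%N then 0
             else - ((s%:R - j%:R + 1) / i%:R) * h s i' j.-1
                  - ((j%:R - i%:R) / i%:R) * h s i' j
  end.

Definition fps := nat -> rat.

Definition fps_mul (f g : fps) : fps :=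
  fun n => \sum_(k < n.+1) f k * g (n - k)%N.

Definition fps_add (f g : fps) : fps := fun n => f n + g n.

Definition fps_deriv (f : fps) : fps := fun n => (n.+1)%:R * f n.+1.

Definition fps_of_poly (p : {poly rat}) : fps := fun n => p`_n.

Definition H (s i : nat) : fps := fun j => if (i < j)%N then h s i j else 0.

(* Main.v *)
Require Import Defs.
From HB Require Import structures.
From mathcomp Require Import all_boot all_order all_algebra.
From mathcomp Require Import ring zify.
From Stdlib Require Import FunctionalExtensionality.
Import Order.TTheory GRing.Theory Num.Theory.
Local Open Scope ring_scope.

Lemma Hh s m n : H s m.+1 n = h s m.+1 n.
Proof.
rewrite /H; case: ltnP => // Hn; rewrite /=.
by rewrite Hn.
Qed.

Lemma hlow s m n : (n <= m.+1)%N -> h s m.+1 n = 0.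
Proof. by move=> Hn /=; rewrite Hn. Qed.

Lemma hS s m j : (m.+1 < j)%N -> h s m.+1 j =
  - ((s%:R - j%:R + 1) / m.+1%:R) * h s m j.-1 - ((j%:R - m.+1%:R) / m.+1%:R) * h s m j.
Proof. by move=> hj /=; rewrite leqNgt hj. Qed.

Lemma coef1 (c : rat) m : (- (c *: 'X - 1))`_m =
  if m == 0%N then 1 else if m == 1%N then - c else 0.
Proof.
case: m => [|[|m]]; rewrite !coefE //=; rewrite ?mulr0 ?mulr1 ?subr0 ?sub0r ?opprK ?oppr0 //.
Qed.

Lemma coef2 (c : rat) m : (c *: ('X * ('X - 1)))`_m =
  if m == 1%N then - c else if m == 2%N then c else 0.
Proof.
rewrite mulrBr mulr1 -expr2 coefZ coefB coefXn coefX.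
case: m => [|[|[|m]]] /=; rewrite ?mulr0 ?mulr1 ?subr0 ?sub0r //.
all: by rewrite ?mulrN1.
Qed.

Theorem lemma2 (s i : nat) (hs : (0 < s)%N) (hi : (1 < i)%N) :
  H s i =
  fps_add
    (fps_mul (fps_of_poly (- ((s%:R / i%:R) *: 'X - 1))) (H s i.-1))
    (fps_mul (fps_of_poly ((i%:R)^-1 *: ('X * ('X - 1))))
             (fps_deriv (H s i.-1))).
Proof.
case: i hi => [|[|k]] // _ /=.
apply: functional_extensionality => n.
rewrite /fps_add /fps_mul /fps_of_poly /fps_deriv.
have i0 : (k.+2)%:R != 0 :> rat by rewrite pnatr_eq0.
under eq_bigr do rewrite coef1.
under [X in _ = _ + X]eq_bigr do rewrite coef2.
have G0 : H s k.+1 0 = 0 by [].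
have G1 : H s k.+1 1 = 0 by rewrite /H ltnS ltn0.
case: n => [|[|n]].
- rewrite /H /= !big_ord_recl !big_ord0 /=.
  by rewrite !(mul0r, mulr0, addr0, mul1r).
- rewrite !big_ord_recl !big_ord0 /= /bump /= !subn0 /= G0 G1.
  by rewrite /H /= !(mul0r, mulr0, addr0, mul1r).
rewrite !big_ord_recl !big1 /= => [|j _|j _]; last first.
- by rewrite mul0r.
- by rewrite mul0r.
rewrite /bump /= !subn0 !subSS subn0 !addr0 mul1r subn0 mul0r addr0.
have -> : H s k.+2 n.+2 = if (k < n)%N then
    - ((s%:R - n.+2%:R + 1) / k.+2%:R) * H s k.+1 n.+1
    - ((n.+2%:R - k.+2%:R) / k.+2%:R) * H s k.+1 n.+2 else 0.
  rewrite Hh; case: ltnP => hk.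
    by rewrite hS // !Hh.
  by rewrite hlow.
have i0' : 2 + k%:R != 0 :> rat by move: i0; rewrite -addn2 natrD addrC.
rewrite mul0r add0r; case: ltnP => hk.
  by field; exact: i0'.
have hb : H s k.+1 n.+1 = 0 by rewrite /H; case: ifP => // ?; lia.
rewrite hb; move: hk; rewrite leq_eqVlt => /orP [/eqP -> | hlt].
  by field; exact: i0'.
have ha : H s k.+1 n.+2 = 0 by rewrite /H; case: ifP => // ?; lia.
by rewrite ha; field; exact: i0'.
Qed.
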